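(* Let $(\Omega,\mathcal F,\mathbb P)$ and $u:\Omega\times\mathbb R\to\mathbb R$ satisfy: (i) for every $\omega$, $u(\omega,\cdot)$ is right continuous with left limits, nondecreasing, and $u(\omega,0)=0$; (ii) $u(\cdot,x)\in\mathcal L^1(\Omega,\mathcal F,\mathbb P)$ for every $x$; (iii) $T_u(f):=\int_\Omega u(\omega,f(\omega))\,\mathbb P(d\omega)$ is continuous from below on $\mathcal L^\infty(\Omega,\mathcal F)$ (i.e. $T_u(f_n)\to T_u(f)$ whenever $f_n(\omega)\uparrow f(\omega)$ for every $\omega$, all bounded measurable). Then there exists $\widehat u:\Omega\times\mathbb R\to\mathbb R$ with $\widehat u(\omega,\cdot)$ nondecreasing and continuous for every $\omega$, such that $E:=\{\omega: u(\omega,x)=\widehat u(\omega,x)\ \forall x\in\mathbb R\}\in\mathcal F$, $\mathbb P(E)=1$, and $T_u(f)=T_{\widehat u}(f)$ for every $f\in\mathcal L^\infty(\Omega,\mathcal F)$. Moreover, if $u(\omega,\cdot)$ is strictly increasing for every $\omega$, then $\widehat u(\omega,\cdot)$ can be taken strictly increasing for every $\omega$.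
   Context: $\mathcal L^\infty(\Omega,\mathcal F)$: bounded $\mathcal F$-measurable real functions; $T_{\widehat u}$ is defined analogously to $T_u$. *)

(* Defs.v *)
From HB Require Import structures.
From mathcomp Require Import all_boot all_order all_algebra.
From mathcomp Require Import all_classical all_reals all_analysis.
Set Implicit Arguments. Unset Strict Implicit. Unset Printing Implicit Defensive.
Import Order.TTheory GRing.Theory Num.Theory.
Import numFieldNormedType.Exports.
Local Open Scope classical_set_scope.
Local Open Scope ring_scope.

Definition Linfty (d : measure_display) (T : measurableType d) (R : realType)
  (f : T -> R) : Prop :=
  measurable_fun setT f /\ exists M : R, forall w, `|f w| <= M.

Definition Tu (d : measure_display) (T : measurableType d) (R : realType)
  (P : probability T R) (u : T -> R -> R) (f : T -> R) : \bar R :=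
  (\int[P]_(w in setT) (u w (f w))%:E)%E.

Definition cont_from_below (d : measure_display) (T : measurableType d)
  (R : realType) (P : probability T R) (u : T -> R -> R) : Prop :=
  forall (fs : nat -> T -> R) (f : T -> R),
    (forall n, Linfty (fs n)) -> Linfty f ->
    (forall w, nondecreasing_seq (fun n => fs n w)) ->
    (forall w, (fun n => fs n w) @ \oo --> f w) ->
    Tu P u (fs n) @[n --> \oo] --> Tu P u f.

(* Main.v *)
Require Import Defs.
From HB Require Import structures.
From mathcomp Require Import all_boot all_order all_algebra.
From mathcomp Require Import all_classical all_reals all_analysis.
From mathcomp Require Import ring lra measurable_realfun.

Import Order.TTheory GRing.Theory Num.Theory.
Import numFieldNormedType.Exports.
Local Open Scope classical_set_scope.
Local Open Scope ring_scope.

Lemma rc_exists {R : realType} {h : R -> R} {x c : R} :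
  h @ x^'+ --> h x -> h x < c -> exists z, x < z /\ h z < c.
Proof.
move=> hx hc; move: hx => /cvgr_lt /(_ c hc) H.
near (x^'+) => z.
exists z; split; near: z; [exact: nbhs_right_gt | exact: H].
Unshelve. all: by end_near.
Qed.

Lemma joint_meas d (T : measurableType d) (R : realType) (u : T -> R -> R)
  (y : T -> R) :
  (forall w x, u w @ x^'+ --> u w x) ->
  (forall w, {homo u w : x z / x <= z}) ->
  (forall x, measurable_fun setT (u ^~ x)) ->
  measurable_fun setT y -> measurable_fun setT (fun w => u w (y w)).
Proof.
move=> rc mon mu my _.
apply: (measurability _ (measurable_realfun.RGenInftyO.measurableE R)) => //.
move=> _ [_ [c ->] <-].
rewrite [X in measurable X](_ : _ = \bigcup_(q : rat)
  ([set w | y w < ratr q] `&` [set w | u w (ratr q) < c])).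
  apply: bigcupT_measurable_rat => q; apply: measurableI.
  - rewrite -[X in measurable X]setTI -preimage_itvNyo.
    by apply: my => //; exact: measurable_itv.
  - rewrite -[X in measurable X]setTI -(@preimage_itvNyo _ _ _ (u ^~ (ratr q))).
    by apply: mu => //; exact: measurable_itv.
rewrite predeqE => w; split.
  move=> [_ /=]; rewrite in_itv /= => uc.
  have [z [yz uz]] := rc_exists (rc w (y w)) uc.
  have [q] := rat_in_itvoo yz; rewrite in_itv /= => /andP[yq qz].
  exists q => //; split => //=.
  by rewrite (le_lt_trans _ uz) // mon // ltW.
move=> [q _ [/= yq uq]]; split => //=; rewrite in_itv /=.
by rewrite (le_lt_trans _ uq) // mon // ltW.
Qed.

Definition Ssel {R : realType} (h : R -> R) (t N : R) : set R :=
  [set x | - N <= x /\ (t <= h x \/ N <= x)].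
Definition gsel {R : realType} (h : R -> R) (t N : R) : R := inf (Ssel h t N).

Section gsel.
Context {R : realType} {h : R -> R} {t N : R}.
Hypothesis N0 : 0 <= N.
Hypothesis hmon : {homo h : x z / x <= z}.
Hypothesis hrc : forall x, h @ x^'+ --> h x.

Lemma Ssel_ne : Ssel h t N !=set0.
Proof. by exists N; split; [rewrite (le_trans _ N0) // oppr_le0 | right]. Qed.

Lemma Ssel_lb : has_lbound (Ssel h t N).
Proof. by exists (- N) => y []. Qed.

Lemma gsel_ge : - N <= gsel h t N.
Proof. by apply: lb_le_inf; [exact: Ssel_ne | move=> y []]. Qed.

Lemma gsel_le_mem x : Ssel h t N x -> gsel h t N <= x.
Proof. by move=> Sx; apply: (ge_inf Ssel_lb). Qed.

Lemma gsel_le : gsel h t N <= N.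
Proof. by apply: gsel_le_mem; split; [rewrite (le_trans _ N0) // oppr_le0 | right]. Qed.

Lemma gsel_mem : Ssel h t N (gsel h t N).
Proof.
split; first exact: gsel_ge.
have [Ng|gN] := leP N (gsel h t N); first by right.
left; rewrite leNgt; apply/negP => hgt.
have [z [gz hz]] := rc_exists (@hrc (gsel h t N)) hgt.
have gm : gsel h t N < Order.min z N by rewrite lt_min gz gN.
have [y [_ [ty|Ny]]] := inf_lt Ssel_ne gm; rewrite lt_min => /andP[yz yN].
  have hyz : h y <= h z by apply: hmon; apply: ltW.
  by move: (le_lt_trans (le_trans ty hyz) hz); rewrite ltxx.
by move: (le_lt_trans Ny yN); rewrite ltxx.
Qed.

Lemma Ssel_up x : gsel h t N <= x -> Ssel h t N x.
Proof.
move=> gx; have [g1 g2] := gsel_mem; split; first exact: le_trans gx.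
case: g2 => [tg|Ng]; [left; exact: le_trans tg (hmon _ _ gx) | right; exact: le_trans gx].
Qed.

Lemma gsel_jump x0 : - N <= x0 -> x0 < N -> (forall y, y < x0 -> h y < t) ->
  t <= h x0 -> gsel h t N = x0.
Proof.
move=> Nx x0N ylt tx; apply/eqP; rewrite eq_le gsel_le_mem /=; last first.
  by split => //; left.
rewrite leNgt; apply/negP => gx; have [_ [tg|Ng]] := gsel_mem.
  by move: (lt_le_trans (ylt _ gx) tg); rewrite ltxx.
by move: (le_lt_trans Ng (lt_trans gx x0N)); rewrite ltxx.
Qed.
End gsel.

Lemma measurable_cstP d (T : measurableType d) (P : Prop) :
  measurable [set _ : T | P].
Proof.
have [p|np] := pselect P.
  by rewrite (_ : [set _ | P] = setT) //; rewrite predeqE.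
by rewrite (_ : [set _ | P] = set0) //; rewrite predeqE.
Qed.

Lemma gsel_meas d (T : measurableType d) (R : realType) (u : T -> R -> R)
  (t N : R) : 0 <= N ->
  (forall w x, u w @ x^'+ --> u w x) ->
  (forall w, {homo u w : x z / x <= z}) ->
  (forall x, measurable_fun setT (u ^~ x)) ->
  measurable_fun setT (fun w => gsel (u w) t N).
Proof.
move=> N0 rc mon mu _.
apply: (measurability _ (measurable_realfun.RGenInftyO.measurableE R)) => //.
move=> _ [_ [c ->] <-].
rewrite [X in measurable X](_ : _ = \bigcup_(q : rat)
  ([set w : T | ratr q < c] `&` [set w | Ssel (u w) t N (ratr q)])).
  apply: bigcupT_measurable_rat => q; apply: measurableI.
    exact: measurable_cstP.
  rewrite /Ssel.
  have [Nq|Nq] := pselect (- N <= ratr q); last first.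
    by rewrite (_ : [set w | _] = set0) //; rewrite predeqE => w; split => // -[].
  have [Nq'|Nq'] := pselect (N <= ratr q).
    by rewrite (_ : [set w | _] = setT) //; rewrite predeqE => w; split => // _; split => //; right.
  rewrite (_ : [set w | _] = setT `&` (u ^~ (ratr q)) @^-1` `[t, +oo[); last first.
    rewrite predeqE => w /=; rewrite in_itv /= andbT; split.
      by move=> [_ [] //].
    by move=> [_ tu]; split => //; left.
  by apply: mu => //; exact: measurable_itv.
rewrite predeqE => w; split.
  move=> [_ /=]; rewrite in_itv /= => gc.
  have [q] := rat_in_itvoo gc; rewrite in_itv /= => /andP[gq qc].
  by exists q => //; split => //=; apply: (Ssel_up N0 (mon w) (rc w)); exact: ltW.
move=> [q _ [/= qc Sq]]; split => //=; rewrite in_itv /=.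
by rewrite (le_lt_trans _ qc) // gsel_le_mem.
Qed.

Section main.
Context {d : measure_display} {T : measurableType d} {R : realType}
  (P : probability T R) (u : T -> R -> R).
Hypothesis rc : forall w x, u w @ x^'+ --> u w x.
Hypothesis mon : forall w, {homo u w : x z / x <= z}.
Hypothesis u0 : forall w, u w 0 = 0.
Hypothesis ui : forall x, P.-integrable setT (fun w => (u w x)%:E).

Lemma umeas x : measurable_fun setT (u ^~ x).
Proof. apply/measurable_EFinP; exact: (measurable_int P (ui x)). Qed.

Lemma ucomp_meas (y : T -> R) : measurable_fun setT y ->
  measurable_fun setT (fun w => u w (y w)).
Proof. exact: joint_meas rc mon umeas. Qed.

Lemma ucomp_int (y : T -> R) (M : R) : measurable_fun setT y -> (forall w, `|y w| <= M) ->
  P.-integrable setT (fun w => (u w (y w))%:E).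
Proof.
move=> my yM.
have [M' [yM' M'0]] : exists M' : R, (forall w, - M' <= y w <= M') /\ 0 <= M'.
  exists `|M|; split; last exact: normr_ge0.
  by move=> w; rewrite -ler_norml (le_trans (yM w)) // ler_norm.
apply: (@le_integrable _ _ _ P setT measurableT _ (fun w => (u w M' - u w (- M'))%:E)).
- by apply/measurable_EFinP; exact: ucomp_meas.
- move=> w _ /=; rewrite lee_fin.
  have /andP[a b] := yM' w.
  have h1 := mon w _ _ a; have h2 := mon w _ _ b.
  have h3 : u w (- M') <= 0 by rewrite -(u0 w); apply: mon; rewrite oppr_le0.
  have h4 : 0 <= u w M' by rewrite -(u0 w); apply: mon.
  rewrite (ger0_norm (x := _ - _)); last by lra.
  rewrite ler_norml; apply/andP; split; lra.
- rewrite (_ : (fun w => _) = ((fun w => (u w M')%:E) \- (fun w => (u w (- M'))%:E))%E).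
    exact: integrableB.
  by apply/funext => w.
Qed.

Hypothesis cfb : cont_from_below P u.

Definition Dn (g : T -> R) (n : nat) (w : T) : R :=
  u w (g w) - u w (g w - (n.+1%:R)^-1).
Definition Ak (g : T -> R) (k : nat) : set T :=
  \bigcap_n [set w | (k.+1%:R)^-1 <= Dn g n w].
Definition Zset (g : T -> R) : set T := \bigcup_k Ak g k.

Lemma Dn_ge0 g n w : 0 <= Dn g n w.
Proof.
by rewrite subr_ge0; apply: mon; rewrite lerBlDr lerDl invr_ge0 ler0n.
Qed.

Lemma Dn_meas g n : measurable_fun setT g -> measurable_fun setT (Dn g n).
Proof.
move=> mg; apply: measurable_funB; first exact: ucomp_meas.
apply: ucomp_meas; apply: measurable_funB => //; exact: measurable_cst.
Qed.

Lemma Ak_meas g k : measurable_fun setT g -> measurable (Ak g k).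
Proof.
move=> mg; apply: bigcapT_measurable => n.
rewrite -[X in measurable X]setTI -(@preimage_itvcy _ _ _ (Dn g n)).
by apply: Dn_meas => //; exact: measurable_itv.
Qed.

Lemma Zset_meas g : measurable_fun setT g -> measurable (Zset g).
Proof. by move=> mg; apply: bigcupT_measurable => k; exact: Ak_meas. Qed.

Lemma Ak_null (g : T -> R) (M : R) k : measurable_fun setT g ->
  (forall w, `|g w| <= M) -> P (Ak g k) = 0.
Proof.
move=> mg gM.
have mA := Ak_meas g k mg.
have c0 : 0 < (k.+1%:R)^-1 :> R by rewrite invr_gt0 ltr0n.
pose gn n w := g w - (n.+1%:R)^-1.
have mgn n : measurable_fun setT (gn n).
  by apply: measurable_funB => //; exact: measurable_cst.
have gnM n w : `|gn n w| <= M + 1.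
  have h0 : 0 < (n.+1%:R)^-1 :> R by rewrite invr_gt0 ltr0n.
  have h1 : (n.+1%:R)^-1 <= 1 :> R by rewrite invf_le1 ?ltr0n // ler1n.
  have := gM w; rewrite ler_norml /gn => /andP[a b].
  move: h0 h1; set e := (n.+1%:R)^-1 => h0 h1.
  by rewrite ler_norml; apply/andP; split; lra.
have Hcvg := cfb gn g.
have Lgn n : Linfty (gn n) by split => //; exists (M + 1).
have Lg : Linfty g by split => //; exists M.
have ndec w : nondecreasing_seq (fun n => gn n w).
  move=> m n mn; rewrite /gn lerD2l lerN2 lef_pV2 ?posrE ?ltr0n // ler_nat.
  by rewrite ltnS.
have cv w : (fun n => gn n w) @ \oo --> g w.
  rewrite -[X in _ --> X]subr0; apply: cvgB; first exact: cvg_cst.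
  exact: cvg_harmonic.
have {}Hcvg := Hcvg Lgn Lg ndec cv.
have gnM' n : forall w, `|gn n w| <= M + 1 := gnM n.
have ig : P.-integrable setT (fun w => (u w (g w))%:E) := ucomp_int g M mg gM.
have ign n : P.-integrable setT (fun w => (u w (gn n w))%:E) :=
  ucomp_int (gn n) (M + 1) (mgn n) (gnM' n).
have eqD n : (\int[P]_(w in setT) (Dn g n w)%:E = Tu P u g - Tu P u (gn n))%E.
  by rewrite /Tu -integralB_EFin //; exact: ign.
have le1 n : (((k.+1%:R)^-1 * fine (P (Ak g k)))%:E <=
    \int[P]_(w in setT) (Dn g n w)%:E)%E.
  rewrite EFinM fineK ?fin_num_measure // -integral_cst //.
  apply: (@le_trans _ _ (\int[P]_(w in Ak g k) (Dn g n w)%:E)%E).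
    apply: ge0_le_integral => //.
    - by move=> w _; rewrite lee_fin ltW.
    - by apply/measurable_EFinP; apply: measurable_funS (Dn_meas g n mg).
    - by move=> w Aw; rewrite lee_fin; exact: (Aw n).
  apply: ge0_subset_integral => //.
  - by apply/measurable_EFinP; exact: Dn_meas.
  - by move=> w _; rewrite lee_fin Dn_ge0.
have fa : Tu P u g \is a fin_num by apply: integrable_fin_num.
have fn n : Tu P u (gn n) \is a fin_num by apply: integrable_fin_num.
have fA : P (Ak g k) \is a fin_num := fin_num_measure P _ mA.
have pA0 : 0 <= fine (P (Ak g k)) by apply: fine_ge0; exact: measure_ge0.
have le2 n : (Tu P u (gn n) <=
    (fine (Tu P u g) - (k.+1%:R)^-1 * fine (P (Ak g k)))%:E)%E.
  have := le1 n; rewrite eqD -(fineK fa) -(fineK (fn n)) -EFinB !lee_fin.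
  rewrite fineK //.
  set a := fine (Tu P u g); set b := fine (Tu P u (gn n)).
  set c := _ * _; move=> h; lra.
have H3 : (Tu P u g <= (fine (Tu P u g) - (k.+1%:R)^-1 * fine (P (Ak g k)))%:E)%E.
  rewrite -{1}(cvg_lim _ Hcvg) //; apply: lime_le; first exact: cvgP Hcvg.
  by apply: nearW => n; exact: le2.
move: H3; rewrite -{1}(fineK fa) lee_fin.
set a := fine (Tu P u g); set c := (k.+1%:R)^-1; set p := fine (P (Ak g k)).
move=> h.
have cp : c * p <= 0 by lra.
have p0 : p = 0.
  apply/eqP; rewrite eq_le pA0 andbT.
  by rewrite -(pmulr_rle0 _ c0).
by rewrite -(fineK fA) -/p p0.
Qed.

Lemma Zset_null (g : T -> R) (M : R) : measurable_fun setT g ->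
  (forall w, `|g w| <= M) -> P (Zset g) = 0.
Proof.
move=> mg gM; apply/eqP; rewrite eq_le measure_ge0 andbT.
have := @measure_sigma_subadditive _ _ _ P (Zset g) (Ak g)
  (fun k => Ak_meas g k mg) (Zset_meas g mg) (fun x h => h).
move/le_trans; apply; rewrite eseries0 // => i _ _.
exact: (Ak_null g M i mg gM).
Qed.

Lemma null_bigcup (F : nat -> set T) : (forall k, measurable (F k)) ->
  (forall k, P (F k) = 0) -> P (\bigcup_k F k) = 0.
Proof.
move=> mF F0; apply/eqP; rewrite eq_le measure_ge0 andbT.
have := @measure_sigma_subadditive _ _ _ P (\bigcup_k F k) F
  mF (bigcupT_measurable F mF) (fun x h => h).
by move/le_trans; apply; rewrite eseries0 // => i _ _; exact: F0.
Qed.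

Definition tq (n : nat) : R :=
  match unpickle n with Some q => ratr (q : rat) | None => 0 end.
Definition gsn (n N : nat) : T -> R := fun w => gsel (u w) (tq n) N%:R.
Definition Zall : set T := \bigcup_n \bigcup_N Zset (gsn n N).

Lemma gsn_meas n N : measurable_fun setT (gsn n N).
Proof. exact: (@gsel_meas _ _ _ u (tq n) N%:R (ler0n _ N) rc mon umeas). Qed.

Lemma gsn_bound n N w : `|gsn n N w| <= N%:R.
Proof.
rewrite ler_norml; apply/andP; split.
  exact: (gsel_ge (ler0n _ N)).
exact: (gsel_le (ler0n _ N)).
Qed.

Lemma Zall_meas : measurable Zall.
Proof.
apply: bigcupT_measurable => n; apply: bigcupT_measurable => N.
exact: Zset_meas (gsn_meas n N).
Qed.

Lemma Zall_null : P Zall = 0.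
Proof.
apply: null_bigcup => n.
  by apply: bigcupT_measurable => N; exact: Zset_meas (gsn_meas n N).
apply: null_bigcup => N; first exact: Zset_meas (gsn_meas n N).
exact: (Zset_null (gsn n N) N%:R (gsn_meas n N) (gsn_bound n N)).
Qed.

Lemma inv_small (e : R) : 0 < e -> exists k : nat, (k.+1%:R)^-1 <= e.
Proof.
move=> e0; exists (Num.Def.archi_bound e^-1).
have ei : 0 <= e^-1 by rewrite invr_ge0 ltW.
have := archi_boundP ei.
set K := Num.Def.archi_bound _ => h.
rewrite -(invrK e) lef_pV2 ?posrE ?invr_gt0 ?ltr0n //.
by rewrite ltW // (lt_le_trans h) // ler_nat.
Qed.

Lemma Zall_cover w x0 c : c < u w x0 -> (forall y, y < x0 -> u w y <= c) ->
  Zall w.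
Proof.
move=> cx yc.
have [q] := rat_in_itvoo cx; rewrite in_itv /= => /andP[cq qx].
have := archi_boundP (normr_ge0 x0); set K := Num.Def.archi_bound _.
rewrite ltr_norml => /andP[Kx xK].
exists (pickle q) => //; exists K => //.
have tqE : tq (pickle q) = ratr q by rewrite /tq pickleK.
have gE : gsn (pickle q) K w = x0.
  rewrite /gsn tqE; apply: (gsel_jump (ler0n _ K)) => //.
  - exact: ltW.
  - by move=> y yx; exact: le_lt_trans (yc y yx) cq.
  - exact: ltW.
have ce : 0 < u w x0 - c by rewrite subr_gt0.
have [k hk] := inv_small (u w x0 - c) ce.
exists k => // m _; rewrite /Dn /= gE.
have h1 : u w (x0 - (m.+1%:R)^-1) <= c.
  by apply: yc; rewrite ltrBlDr ltrDl invr_gt0 ltr0n.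
move: hk h1; set a := (k.+1%:R)^-1; set b := u w (x0 - _) => hk h1; lra.
Qed.

Lemma cont_of w : (forall x0 c, c < u w x0 -> exists y, y < x0 /\ c < u w y) ->
  continuous (u w).
Proof.
move=> H x; apply/cvgrPdist_lt => e e0.
have xe : u w x < u w x + e by rewrite ltrDl.
have [z [xz hz]] := rc_exists (rc w x) xe.
have xe' : u w x - e < u w x by rewrite ltrBlDr ltrDl.
have [y [yx hy]] := H x _ xe'.
near=> t.
have yt : y < t by near: t; exact: lt_nbhsr yx.
have tz : t < z by near: t; exact: lt_nbhsl xz.
have h1 := mon w _ _ (ltW yt); have h2 := mon w _ _ (ltW tz).
rewrite ltr_distlC; apply/andP; split; lra.
Unshelve. all: by end_near.
Qed.

Lemma cont_outside w : ~ Zall w -> continuous (u w).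
Proof.
move=> nZ; apply: cont_of => x0 c cx.
have [//|nH] := pselect (exists y, y < x0 /\ c < u w y).
exfalso; apply: nZ; apply: (Zall_cover w x0 c cx) => y yx.
by rewrite leNgt; apply/negP => cy; apply: nH; exists y.
Qed.

End main.

Theorem mainTheorem15 (d : measure_display) (T : measurableType d)
  (R : realType) (P : probability T R) (u : T -> R -> R) :
  (forall w,
     (forall x : R, u w @ x^'+ --> u w x) /\
     (forall x : R, cvg (u w @ x^'-)) /\
     {homo u w : x y / x <= y} /\
     u w 0 = 0) ->
  (forall x : R, P.-integrable setT (fun w => (u w x)%:E)) ->
  cont_from_below P u ->
  (exists uh : T -> R -> R,
     (forall w, {homo uh w : x y / x <= y} /\ continuous (uh w)) /\
     measurable [set w | forall x, u w x = uh w x] /\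
     P [set w | forall x, u w x = uh w x] = 1%E /\
     (forall f : T -> R, Linfty f -> Tu P u f = Tu P uh f)) /\
  ((forall w, {homo u w : x y / x < y}) ->
   exists uh : T -> R -> R,
     (forall w, {homo uh w : x y / x < y} /\ {homo uh w : x y / x <= y} /\
                continuous (uh w)) /\
     measurable [set w | forall x, u w x = uh w x] /\
     P [set w | forall x, u w x = uh w x] = 1%E /\
     (forall f : T -> R, Linfty f -> Tu P u f = Tu P uh f)).
Proof.
move=> H1 H2 H3.
have rc w x : u w @ x^'+ --> u w x := (H1 w).1 x.
have mon w : {homo u w : x y / x <= y} := (H1 w).2.2.1.
have u0 w : u w 0 = 0 := (H1 w).2.2.2.
have mZ := Zall_meas P u rc mon H2.
have PZ := Zall_null P u rc mon u0 H2 H3.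
pose G := ~` Zall u.
pose uh w x := if w \in G then u w x else x * (`|u w 1| + 1).
have c0 w : 0 < `|u w 1| + 1 by rewrite ltr_pwDr // normr_ge0.
have uhG w : G w -> uh w = u w.
  by move=> Gw; apply/funext => x; rewrite /uh mem_set.
have uhN w : ~ G w -> uh w = (fun x => x * (`|u w 1| + 1)).
  by move=> Gw; apply/funext => x; rewrite /uh memNset.
have EG : [set w | forall x, u w x = uh w x] = G.
  rewrite predeqE => w; split.
    move=> h; apply: contrapT => nG; have := h 1; rewrite uhN // mul1r.
    move=> e; have := ler_norm (u w 1).
    by rewrite {1}e gerDl ler10.
  by move=> Gw x; rewrite uhG.
have mG : measurable G by exact: measurableC.
have PG : P G = 1%E by rewrite probability_setC // PZ sube0.
have Teq : forall f : T -> R, Linfty f -> Tu P u f = Tu P uh f.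
  move=> f [mf [M fM]]; rewrite /Tu.
  apply: ae_eq_integral => //.
  - apply/measurable_EFinP; exact: (ucomp_meas P u rc mon H2 f mf).
  - apply/measurable_EFinP.
    rewrite (_ : (fun w => uh w (f w)) = (fun w => if w \in G then u w (f w)
       else f w * (`|u w 1| + 1))) //.
    apply: measurable_fun_ifT.
    + apply: (measurable_fun_bool true).
      rewrite (_ : _ `&` _ = G) // predeqE => w; split.
        by move=> [_ /=] /set_mem.
      by move=> Gw; split => //=; exact: mem_set.
    + exact: (ucomp_meas P u rc mon H2 f mf).
    + apply: measurable_funM => //; apply: measurable_funD; last first.
        exact: measurable_cst.
      apply: measurableT_comp; first exact: normr_measurable.
      exact: (umeas P u H2 1).
  - exists (Zall u); split => //.
    move=> w /= nE; apply: contrapT => nZ; apply: nE => _.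
    by rewrite uhG.
have contG w : G w -> continuous (u w) by move=> Gw; exact: cont_outside.
split.
  exists uh; split; last by rewrite EG.
  move=> w; have [Gw|nGw] := pselect (G w).
    by rewrite uhG //; split; [exact: mon | exact: contG].
  rewrite uhN //; split.
    by move=> x y xy; rewrite ler_pM2r.
  exact: mulrr_continuous.
move=> Hs; exists uh; split; last by rewrite EG.
move=> w; have [Gw|nGw] := pselect (G w).
  by rewrite uhG //; split; [exact: Hs | split; [exact: mon | exact: contG]].
rewrite uhN //; split; first by move=> x y xy; rewrite ltr_pM2r.
split; first by move=> x y xy; rewrite ler_pM2r.
exact: mulrr_continuous.
Qed.
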